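(* Let $Q$ be an automorphic loop and for $x\in Q$ define $P_x=R_x^{-1}L_{x^{-1}}$ (equivalently $P_x=R_x^{-1}R_x^J$, where $R_x^J=J^{-1}R_xJ$ and $J$ is inversion). Then for all $a,b\in Q$ we have $P_aP_bP_a=P_c$ where $c=b\,L_{a^{-1}}^{-1}R_a$. Moreover, $P_a^n=P_{a^n}$ for all $a\in Q$ and all integers $n$.
   Context: A loop is a set with a binary operation in which left and right division are uniquely solvable and which has a neutral element $1$. $R_a:x\mapsto xa$, $L_a:x\mapsto ax$; $\mathrm{Mlt}(Q)=\langle R_x,L_x\mid x\in Q\rangle$; $\mathrm{Inn}(Q)$ is the stabilizer of $1$ in $\mathrm{Mlt}(Q)$. $Q$ is automorphic if $\mathrm{Inn}(Q)\le\mathrm{Aut}(Q)$. Automorphic loops are power-associative (each element generates a cyclic group), so $x^{-1}$ and $a^n$ are well defined; $J:x\mapsto x^{-1}$. Maps act on the right and are composed left to right: $x(fg)=(xf)g$, and $xf$ denotes the image of $x$ under $f$. *)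

(* Defs.v *)
(* Loops given equationally: mul, left division ldiv (a \ b),
   right division rdiv (b / a), identity one. *)
From Stdlib Require Import ZArith.

Record loop := Loop {
  carrier :> Type;
  mul : carrier -> carrier -> carrier;
  ldiv : carrier -> carrier -> carrier;
  rdiv : carrier -> carrier -> carrier;
  one : carrier;
  ldiv_mul : forall a b, ldiv a (mul a b) = b;
  mul_ldiv : forall a b, mul a (ldiv a b) = b;
  rdiv_mul : forall a b, rdiv (mul b a) a = b;
  mul_rdiv : forall a b, mul (rdiv b a) a = b;
  mul1x : forall x, mul one x = x;
  mulx1 : forall x, mul x one = x
}.

Arguments mul {l}.
Arguments ldiv {l}.
Arguments rdiv {l}.
Arguments one {l}.

Section LoopDefs.
Variable Q : loop.

(* Maps act on the right; we represent x f as (f x), so "f then g" is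
   fun x => g (f x). *)
Definition Rm (a : Q) : Q -> Q := fun x => mul x a.
Definition Lm (a : Q) : Q -> Q := fun x => mul a x.
Definition Rinv (a : Q) : Q -> Q := fun x => rdiv x a.
Definition Linv (a : Q) : Q -> Q := fun x => ldiv a x.

(* Mlt(Q): the group generated by all R_x, L_x, i.e. all finite composites
   of the generators and their inverses. *)
Inductive mlt : (Q -> Q) -> Prop :=
  | mlt_id : mlt (fun x => x)
  | mlt_R f a : mlt f -> mlt (fun x => Rm a (f x))
  | mlt_Ri f a : mlt f -> mlt (fun x => Rinv a (f x))
  | mlt_L f a : mlt f -> mlt (fun x => Lm a (f x))
  | mlt_Li f a : mlt f -> mlt (fun x => Linv a (f x)).

Definition inn (f : Q -> Q) : Prop := mlt f /\ f one = one.

Definition is_automorphism (f : Q -> Q) : Prop :=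
  (exists g : Q -> Q, (forall x, g (f x) = x) /\ (forall x, f (g x) = x)) /\
  (forall x y, f (mul x y) = mul (f x) (f y)).

Definition automorphic : Prop := forall f, inn f -> is_automorphism f.

(* inverse x^{-1}: the solution of x * y = 1 (two-sided in automorphic loops) *)
Definition linv (x : Q) : Q := ldiv x one.

Fixpoint npow (a : Q) (n : nat) : Q :=
  match n with O => one | S m => mul (npow a m) a end.

Definition zpow (a : Q) (n : Z) : Q :=
  match n with
  | Z0 => one
  | Zpos p => npow a (Pos.to_nat p)
  | Zneg p => linv (npow a (Pos.to_nat p))
  end.

Definition Pm (x : Q) : Q -> Q := fun y => Lm (linv x) (Rinv x y).
Definition Pinv (x : Q) : Q -> Q := fun y => Rm x (Linv (linv x) y).

Definition Ppow (a : Q) (n : Z) : Q -> Q :=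
  match n with
  | Z0 => fun y => y
  | Zpos p => Nat.iter (Pos.to_nat p) (Pm a)
  | Zneg p => Nat.iter (Pos.to_nat p) (Pinv a)
  end.

End LoopDefs.

Arguments mlt {Q}.
Arguments inn {Q}.
Arguments automorphic Q : clear implicits.
Arguments linv {Q}.
Arguments zpow {Q}.
Arguments Pm {Q}.
Arguments Pinv {Q}.
Arguments Ppow {Q}.
Arguments Rm {Q}.
Arguments Lm {Q}.
Arguments Rinv {Q}.
Arguments Linv {Q}.

(* Main.v *)
Require Import Defs.
From Stdlib Require Import ZArith Lia.

Lemma aut_mul (Q : loop) (HA : automorphic Q) (f : Q -> Q) :
  mlt f -> f one = one -> forall x y : Q, f (mul x y) = mul (f x) (f y).
Proof. intros Hm H1. destruct (HA f (conj Hm H1)) as [_ H]. exact H. Qed.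

Lemma lcancel (Q : loop) (x y z : Q) : mul x y = mul x z -> y = z.
Proof. intro H. rewrite <- (ldiv_mul Q x y), <- (ldiv_mul Q x z), H. reflexivity. Qed.

Lemma rcancel (Q : loop) (x y z : Q) : mul y x = mul z x -> y = z.
Proof. intro H. rewrite <- (rdiv_mul Q x y), <- (rdiv_mul Q x z), H. reflexivity. Qed.

Lemma ldiv_self (Q : loop) (x : Q) : ldiv x x = one.
Proof. apply (lcancel Q x). rewrite mul_ldiv, mulx1. reflexivity. Qed.

Lemma rdiv_self (Q : loop) (x : Q) : rdiv x x = one.
Proof. apply (rcancel Q x). rewrite mul_rdiv, mul1x. reflexivity. Qed.

Lemma mul_linv (Q : loop) (x : Q) : mul x (linv x) = one.
Proof. unfold linv. apply mul_ldiv. Qed.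

Lemma linv_mul (Q : loop) (HA : automorphic Q) (x : Q) : mul (linv x) x = one.
Proof.
  set (T := fun z : Q => ldiv x (mul z x)).
  assert (Hm : mlt T).
  { unfold T. change (mlt (fun z : Q => Linv x (Rm x z))).
    apply (mlt_Li Q (fun z => Rm x z)). apply (mlt_R Q (fun z => z)). apply mlt_id. }
  assert (H1 : T one = one). { unfold T. rewrite mul1x. apply ldiv_self. }
  pose proof (aut_mul Q HA T Hm H1 (rdiv one x) x) as H.
  unfold T in H. rewrite mul_rdiv, mul1x, ldiv_self in H.
  rewrite (ldiv_mul Q x x) in H. unfold linv. symmetry. exact H.
Qed.

Lemma linv_linv (Q : loop) (HA : automorphic Q) (x : Q) : linv (linv x) = x.
Proof. unfold linv at 1. rewrite <- (linv_mul Q HA x). apply ldiv_mul. Qed.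

Lemma aut_linv (Q : loop) (HA : automorphic Q) (f : Q -> Q) :
  mlt f -> f one = one -> forall x : Q, f (linv x) = linv (f x).
Proof.
  intros Hm H1 x. apply (lcancel Q (f x)). rewrite <- (aut_mul Q HA f Hm H1).
  rewrite !mul_linv. exact H1.
Qed.

Lemma RR_comm (Q : loop) (HA : automorphic Q) (u x : Q) :
  mul (mul u (linv x)) x = mul (mul u x) (linv x).
Proof.
  set (B := fun z : Q => mul (mul z x) (linv x)).
  assert (Hm : mlt B).
  { unfold B. change (mlt (fun z : Q => Rm (linv x) (Rm x z))).
    apply (mlt_R Q (fun z => Rm x z)). apply (mlt_R Q (fun z => z)). apply mlt_id. }
  assert (H1 : B one = one). { unfold B. rewrite mul1x. apply mul_linv. }
  assert (Hx : B x = x).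
  { rewrite <- (linv_linv Q HA x) at 1. rewrite (aut_linv Q HA B Hm H1).
    unfold B. rewrite (linv_mul Q HA x), mul1x. apply linv_linv; exact HA. }
  pose proof (aut_mul Q HA B Hm H1 (rdiv u x) x) as H.
  rewrite Hx in H. unfold B in H. rewrite mul_rdiv in H. symmetry. exact H.
Qed.

Lemma LR_comm (Q : loop) (HA : automorphic Q) (u w : Q) :
  mul (linv w) (mul u w) = mul (mul (linv w) u) w.
Proof.
  set (D := fun z : Q => mul (linv w) (mul z w)).
  assert (Hm : mlt D).
  { unfold D. change (mlt (fun z : Q => Lm (linv w) (Rm w z))).
    apply (mlt_L Q (fun z => Rm w z)). apply (mlt_R Q (fun z => z)). apply mlt_id. }
  assert (H1 : D one = one). { unfold D. rewrite mul1x. apply (linv_mul Q HA). }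
  assert (Hx : D w = w).
  { rewrite <- (linv_linv Q HA w) at 1. rewrite (aut_linv Q HA D Hm H1).
    unfold D. rewrite (linv_mul Q HA w), mulx1. apply linv_linv; exact HA. }
  pose proof (aut_mul Q HA D Hm H1 (rdiv u w) w) as H.
  rewrite Hx in H. unfold D in H. rewrite mul_rdiv in H. exact H.
Qed.

Lemma aaip (Q : loop) (HA : automorphic Q) (x y : Q) :
  linv (mul x y) = mul (linv y) (linv x).
Proof.
  set (w := mul x y).
  set (R := fun z : Q => rdiv (mul (mul z x) y) w).
  assert (Hm : mlt R).
  { unfold R. change (mlt (fun z : Q => Rinv w (Rm y (Rm x z)))).
    apply (mlt_Ri Q (fun z => Rm y (Rm x z))).
    apply (mlt_R Q (fun z => Rm x z)). apply (mlt_R Q (fun z => z)). apply mlt_id. }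
  assert (H1 : R one = one). { unfold R. rewrite mul1x. apply rdiv_self. }
  pose proof (aut_mul Q HA R Hm H1 (rdiv (linv y) x) (linv x)) as H.
  unfold R in H at 1.
  rewrite (RR_comm Q HA), mul_rdiv in H.
  assert (E1 : R (rdiv (linv y) x) = linv w).
  { unfold R. rewrite mul_rdiv, (linv_mul Q HA y).
    rewrite <- (linv_mul Q HA w). apply rdiv_mul. }
  assert (E2 : R (linv x) = rdiv y w).
  { unfold R. rewrite (linv_mul Q HA x), mul1x. reflexivity. }
  rewrite E1, E2 in H.
  assert (E3 : mul (linv w) (rdiv y w) = rdiv (mul (linv w) y) w).
  { apply (rcancel Q w). rewrite mul_rdiv, <- (LR_comm Q HA), mul_rdiv. reflexivity. }
  rewrite E3 in H.
  assert (H' : mul (mul (linv y) (linv x)) y = mul (linv w) y).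
  { rewrite <- (mul_rdiv Q w (mul (mul (linv y) (linv x)) y)), H. apply mul_rdiv. }
  symmetry. exact (rcancel Q y _ _ H').
Qed.

Lemma part1 (Q : loop) (HA : automorphic Q) (a b y : Q) :
  Pm a (Pm b (Pm a y)) = Pm (Rm a (Linv (linv a) b)) y.
Proof.
  set (c := mul (ldiv (linv a) b) a).
  change (Rm a (Linv (linv a) b)) with c.
  set (phi := fun u : Q => rdiv (mul (ldiv (linv a) (mul u b)) a) c).
  assert (Hm : mlt phi).
  { unfold phi. change (mlt (fun u : Q => Rinv c (Rm a (Linv (linv a) (Rm b u))))).
    apply (mlt_Ri Q (fun u => Rm a (Linv (linv a) (Rm b u)))).
    apply (mlt_R Q (fun u => Linv (linv a) (Rm b u))).
    apply (mlt_Li Q (fun u => Rm b u)).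
    apply (mlt_R Q (fun u => u)). apply mlt_id. }
  assert (H1 : phi one = one). { unfold phi. rewrite mul1x. apply rdiv_self. }
  set (z := rdiv (Pm a y) b).
  assert (Hz : phi z = rdiv y c).
  { unfold phi, z. rewrite mul_rdiv. unfold Pm, Lm, Rinv. rewrite ldiv_mul, mul_rdiv.
    reflexivity. }
  assert (K : linv (mul (phi (linv z)) c) = Pm c y).
  { rewrite (aaip Q HA), (aut_linv Q HA phi Hm H1), (linv_linv Q HA), Hz. reflexivity. }
  set (p := ldiv (linv a) (mul (linv z) b)).
  assert (K2 : mul (phi (linv z)) c = mul p a).
  { unfold phi. apply mul_rdiv. }
  assert (K3 : linv p = rdiv (mul (linv b) z) a).
  { apply (rcancel Q a). rewrite mul_rdiv.
    transitivity (linv (mul (linv a) p)).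
    - rewrite (aaip Q HA), (linv_linv Q HA). reflexivity.
    - unfold p. rewrite mul_ldiv, (aaip Q HA), (linv_linv Q HA). reflexivity. }
  rewrite <- K, K2, (aaip Q HA), K3.
  reflexivity.
Qed.

Lemma iter_succ_r' {A : Type} (f : A -> A) (n : nat) (x : A) :
  Nat.iter (S n) f x = Nat.iter n f (f x).
Proof. induction n as [|n IH]; simpl; [reflexivity|]. simpl in IH. rewrite IH. reflexivity. Qed.

Lemma Pm_one (Q : loop) (y : Q) : Pm one y = y.
Proof.
  unfold Pm, Lm, Rinv, linv. rewrite ldiv_self, mul1x.
  rewrite <- (mulx1 Q y) at 1. apply rdiv_mul.
Qed.

Lemma Pinv_Pm (Q : loop) (x y : Q) : Pinv x (Pm x y) = y.
Proof. unfold Pinv, Pm, Rm, Linv, Lm, Rinv. rewrite ldiv_mul. apply mul_rdiv. Qed.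

Lemma Pm_Pinv (Q : loop) (x y : Q) : Pm x (Pinv x y) = y.
Proof. unfold Pinv, Pm, Rm, Linv, Lm, Rinv. rewrite rdiv_mul. apply mul_ldiv. Qed.

Lemma npow_step (Q : loop) (HA : automorphic Q) (a : Q) (k : nat) :
  ldiv (linv a) (npow Q a k) = npow Q a (S k).
Proof.
  assert (H : forall j, mul (linv a) (npow Q a (S j)) = npow Q a j).
  { intro j; induction j as [|m IH].
    - simpl. rewrite mul1x. apply (linv_mul Q HA).
    - change (npow Q a (S (S m))) with (mul (npow Q a (S m)) a).
      rewrite (LR_comm Q HA), IH. reflexivity. }
  rewrite <- (H k). apply ldiv_mul.
Qed.

Lemma iterP (Q : loop) (HA : automorphic Q) (a : Q) (k : nat) (y : Q) :
  Nat.iter k (Pm a) y = Pm (npow Q a k) y.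
Proof.
  revert y.
  assert (H : forall j, (forall y, Nat.iter j (Pm a) y = Pm (npow Q a j) y) /\
                        (forall y, Nat.iter (S j) (Pm a) y = Pm (npow Q a (S j)) y)).
  { intro j; induction j as [|m [IH1 IH2]].
    - split; intro y.
      + simpl. symmetry. apply Pm_one.
      + simpl. rewrite mul1x. reflexivity.
    - split; [exact IH2|]. intro y.
      change (Nat.iter (S (S m)) (Pm a) y) with (Pm a (Nat.iter (S m) (Pm a) y)).
      rewrite iter_succ_r', IH1, (part1 Q HA).
      unfold Rm, Linv. rewrite (npow_step Q HA). reflexivity. }
  apply H.
Qed.

Lemma Pm_linv (Q : loop) (HA : automorphic Q) (x y : Q) : Pm (linv x) y = Pinv x y.
Proof.
  assert (H : forall u, Pm (linv x) (Pm x u) = u).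
  { intro u. pose proof (part1 Q HA x (linv x) u) as E.
    unfold Rm at 1 in E. unfold Linv at 1 in E. rewrite ldiv_self, mul1x in E.
    rewrite <- (Pinv_Pm Q x (Pm (linv x) (Pm x u))), E. apply Pinv_Pm. }
  rewrite <- (Pm_Pinv Q x y) at 1. apply H.
Qed.

Lemma iter_inv (Q : loop) (a : Q) (k : nat) (y : Q) :
  Nat.iter k (Pm a) (Nat.iter k (Pinv a) y) = y.
Proof.
  induction k as [|k IH]; [reflexivity|].
  rewrite iter_succ_r'. simpl. rewrite Pm_Pinv. exact IH.
Qed.

Theorem lemma2p3 (Q : loop) (HA : automorphic Q) :
  (forall a b : Q,
     forall y : Q,
       Pm a (Pm b (Pm a y)) = Pm (Rm a (Linv (linv a) b)) y) /\
  (forall (a : Q) (n : Z) (y : Q), Ppow a n y = Pm (zpow a n) y).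
Proof.
  split.
  - apply (part1 Q HA).
  - intros a n y. destruct n as [|p|p]; simpl.
    + symmetry. apply Pm_one.
    + apply (iterP Q HA).
    + rewrite (Pm_linv Q HA).
      rewrite <- (iter_inv Q a (Pos.to_nat p) y) at 2.
      rewrite (iterP Q HA). symmetry. apply Pinv_Pm.
Qed.
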